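(* Let $g\colon X\to\mathcal Q^{\vartriangle}$ be closed and convex. Then $g^{**}=g$, where for $x\in X$ $$g^{**}(x)=\bigcap_{\xi\in X^{\vartriangle},\,r\in\mathbb R,\,z^*\in C^-}\big(S_{(\xi,r,z^* )}(x)-^{\vartriangle}g^*(\xi,r,z^* )\big)$$ and $g^*\colon X^{\vartriangle}\times\mathbb R\times C^-\to\mathcal Q^{\vartriangle}$ is $g^*(\xi,r,z^* )=\bigcap_{x\in X}\big(S_{(\xi,r,z^* )}(x)-^{\vartriangle}g(x)\big)$.
   Context: $X,Z$ are separated locally convex spaces with duals $X^*,Z^*$; $C\subseteq Z$ convex cone with $0\in C$, $C^-=\{z^*\in Z^*: z^*(z)\leq0\ \forall z\in C\}$, assumed $\neq\{0\}$. $\mathcal Q^{\vartriangle}=\{A\subseteq Z: A=\operatorname{cl}\operatorname{co}(A+C)\}$ (contains $\emptyset$). $g$ is convex (closed) iff $\operatorname{gr}g=\{(x,z): z\in g(x)\}$ is convex (closed) in $X\times Z$. For $A,B\subseteq Z$: $A-^{\vartriangle}B=\{z\in Z: B+\{z\}\subseteq A\}$. For $x^*\in X^*$, $r\in\mathbb R$: $x^*_r(x)=x^*(x)-r$, $\hat x^*_r(x)=-\infty$ if $x^*(x)\leq r$, $+\infty$ otherwise; $\hat x^*=\hat x^*_0$; $X^{\vartriangle}=X^*\cup\{\hat x^*: x^*\in X^*\}$; $\xi_r=x^*_r$ if $\xi=x^*$, $\xi_r=\hat x^*_r$ if $\xi=\hat x^*$. Conaffine functions: $S_{(\xi,r,z^*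 )}(x)=\{z\in Z: \xi_r(x)\leq -z^*(z)\}$ for $\xi\in X^{\vartriangle}$, $r\in\mathbb R$, $z^*\in C^-$ (order of $\overline{\mathbb R}=\mathbb R\cup\{\pm\infty\}$). *)

(* Defs.v *)
From Stdlib Require Import Reals.
Open Scope R_scope.

Definition convex_in {T : Type} (add : T -> T -> T) (scal : R -> T -> T) (A : T -> Prop) : Prop :=
  forall x y t, A x -> A y -> 0 <= t <= 1 -> A (add (scal t x) (scal (1 - t) y)).

Record LCS := {
  car :> Type;
  vadd : car -> car -> car;
  vscal : R -> car -> car;
  vzero : car;
  vadd_assoc : forall x y z, vadd x (vadd y z) = vadd (vadd x y) z;
  vadd_comm : forall x y, vadd x y = vadd y x;
  vadd_0l : forall x, vadd vzero x = x;
  vadd_opp : forall x, vadd (vscal (-1) x) x = vzero;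
  vscal_1 : forall x, vscal 1 x = x;
  vscal_assoc : forall a b x, vscal a (vscal b x) = vscal (a * b) x;
  vscal_addR : forall a b x, vscal (a + b) x = vadd (vscal a x) (vscal b x);
  vscal_addV : forall a x y, vscal a (vadd x y) = vadd (vscal a x) (vscal a y);
  is_open : (car -> Prop) -> Prop;
  open_full : is_open (fun _ => True);
  open_inter : forall U V, is_open U -> is_open V -> is_open (fun x => U x /\ V x);
  open_union : forall F : (car -> Prop) -> Prop, (forall U, F U -> is_open U) ->
                 is_open (fun x => exists U, F U /\ U x);
  vadd_cont : forall W x y, is_open W -> W (vadd x y) ->
      exists U V, is_open U /\ is_open V /\ U x /\ V y /\
        forall u v, U u -> V v -> W (vadd u v);
  vscal_cont : forall W a x, is_open W -> W (vscal a x) ->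
      exists eps U, eps > 0 /\ is_open U /\ U x /\
        forall b u, Rabs (b - a) < eps -> U u -> W (vscal b u);
  loc_convex : forall W, is_open W -> W vzero ->
      exists U, is_open U /\ U vzero /\ convex_in vadd vscal U /\ forall x, U x -> W x;
  hausdorff : forall x y, x <> y ->
      exists U V, is_open U /\ is_open V /\ U x /\ V y /\ forall w, U w -> V w -> False
}.

Arguments vadd {l}. Arguments vscal {l}. Arguments vzero {l}. Arguments is_open {l}.

Definition convex {X : LCS} (A : X -> Prop) : Prop := convex_in vadd vscal A.

Definition R_open (U : R -> Prop) : Prop :=
  forall t, U t -> exists eps, eps > 0 /\ forall s, Rabs (s - t) < eps -> U s.

Definition is_dual {X : LCS} (f : X -> R) : Prop :=
  (forall x y, f (vadd x y) = f x + f y) /\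
  (forall a x, f (vscal a x) = a * f x) /\
  (forall U, R_open U -> is_open (fun x => U (f x))).

Definition closure {X : LCS} (A : X -> Prop) : X -> Prop :=
  fun x => forall U, is_open U -> U x -> exists a, A a /\ U a.

Definition conv_hull {X : LCS} (A : X -> Prop) : X -> Prop :=
  fun x => forall K, convex K -> (forall a, A a -> K a) -> K x.

Definition set_plus {X : LCS} (A B : X -> Prop) : X -> Prop :=
  fun z => exists a b, A a /\ B b /\ z = vadd a b.

Definition convex_cone {Z : LCS} (C : Z -> Prop) : Prop :=
  C vzero /\ convex C /\ forall t c, 0 <= t -> C c -> C (vscal t c).

Definition neg_dual {Z : LCS} (C : Z -> Prop) (zs : Z -> R) : Prop :=
  is_dual zs /\ forall z, C z -> zs z <= 0.

Definition inQ {Z : LCS} (C : Z -> Prop) (A : Z -> Prop) : Prop :=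
  forall z, A z <-> closure (conv_hull (set_plus A C)) z.

Definition prod_open {X Z : LCS} (W : X -> Z -> Prop) : Prop :=
  forall x z, W x z -> exists U V, is_open U /\ is_open V /\ U x /\ V z /\
    forall u v, U u -> V v -> W u v.

Definition graph_closed {X Z : LCS} (g : X -> Z -> Prop) : Prop :=
  prod_open (fun x z => ~ g x z).

Definition graph_convex {X Z : LCS} (g : X -> Z -> Prop) : Prop :=
  forall x1 z1 x2 z2 t, g x1 z1 -> g x2 z2 -> 0 <= t <= 1 ->
    g (vadd (vscal t x1) (vscal (1 - t) x2)) (vadd (vscal t z1) (vscal (1 - t) z2)).

Definition inf_diff {Z : LCS} (A B : Z -> Prop) : Z -> Prop :=
  fun z => forall b, B b -> A (vadd b z).

Inductive Rbar := Fin (r : R) | PInf | MInf.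
Definition Rbar_le (a b : Rbar) : Prop :=
  match a, b with
  | MInf, _ => True
  | _, PInf => True
  | Fin x, Fin y => x <= y
  | _, _ => False
  end.

(* X^triangle = X^* \cup { hat x^* } ; Lin f stands for x^*, Hat f for hat x^* *)
Inductive Xtri (X : LCS) := Lin (f : X -> R) | Hat (f : X -> R).
Arguments Lin {X}. Arguments Hat {X}.

Definition in_Xtri {X : LCS} (xi : Xtri X) : Prop :=
  match xi with Lin f => is_dual f | Hat f => is_dual f end.

Definition xi_r {X : LCS} (xi : Xtri X) (r : R) (x : X) : Rbar :=
  match xi with
  | Lin f => Fin (f x - r)
  | Hat f => if Rle_dec (f x) r then MInf else PInf
  end.

Definition S_conaff {X Z : LCS} (xi : Xtri X) (r : R) (zs : Z -> R) (x : X) : Z -> Prop :=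
  fun z => Rbar_le (xi_r xi r x) (Fin (- zs z)).

Definition conj1 {X Z : LCS} (g : X -> Z -> Prop) (xi : Xtri X) (r : R) (zs : Z -> R) : Z -> Prop :=
  fun w => forall x : X, inf_diff (S_conaff xi r zs x) (g x) w.

Definition conj2 {X Z : LCS} (C : Z -> Prop) (g : X -> Z -> Prop) (x : X) : Z -> Prop :=
  fun z => forall (xi : Xtri X) (r : R) (zs : Z -> R),
    in_Xtri xi -> neg_dual C zs ->
    inf_diff (S_conaff xi r zs x) (conj1 g xi r zs) z.

(* Main.v *)
Require Import Defs.
From Stdlib Require Import Reals Lra Classical ClassicalEpsilon FunctionalExtensionality PropExtensionality.
Open Scope R_scope.

Record VS := {
  vc :> Type;
  ad : vc -> vc -> vc;
  sc : R -> vc -> vc;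
  z0 : vc;
  ad_assoc : forall x y z, ad x (ad y z) = ad (ad x y) z;
  ad_comm : forall x y, ad x y = ad y x;
  ad_0l : forall x, ad z0 x = x;
  ad_opp : forall x, ad (sc (-1) x) x = z0;
  sc_1 : forall x, sc 1 x = x;
  sc_assoc : forall a b x, sc a (sc b x) = sc (a * b) x;
  sc_addR : forall a b x, sc (a + b) x = ad (sc a x) (sc b x);
  sc_addV : forall a x y, sc a (ad x y) = ad (sc a x) (sc a y)
}.
Arguments ad {v}. Arguments sc {v}. Arguments z0 {v}.

Lemma ad_0r (V : VS) (x : V) : ad x z0 = x.
Proof. rewrite ad_comm; apply ad_0l. Qed.

Lemma ad_opp_r (V : VS) (x : V) : ad x (sc (-1) x) = z0.
Proof. rewrite ad_comm; apply ad_opp. Qed.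

Lemma ad_cancel_l (V : VS) (m a b : V) : ad m a = ad m b -> a = b.
Proof.
  intro H. rewrite <- (ad_0l V a), <- (ad_0l V b), <- (ad_opp V m).
  rewrite <- !ad_assoc, H. reflexivity.
Qed.

Lemma ad_cancel_r (V : VS) (m a b : V) : ad a m = ad b m -> a = b.
Proof. rewrite (ad_comm V a), (ad_comm V b). apply ad_cancel_l. Qed.

Lemma sc_0 (V : VS) (x : V) : sc 0 x = z0.
Proof.
  apply (ad_cancel_l V (sc 0 x)). rewrite ad_0r, <- sc_addR.
  f_equal; ring.
Qed.

Lemma sc_z (V : VS) (a : R) : sc a (@z0 V) = z0.
Proof. rewrite <- (sc_0 V z0), sc_assoc, Rmult_0_r. reflexivity. Qed.

Lemma ad_ACP (V : VS) (a b c d : V) : ad (ad a b) (ad c d) = ad (ad a c) (ad b d).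
Proof.
  rewrite <- !ad_assoc. f_equal. rewrite !ad_assoc. f_equal. apply ad_comm.
Qed.

Lemma sc_comb (V : VS) (t s : R) (x : V) : ad (sc t x) (sc s x) = sc (t + s) x.
Proof. rewrite sc_addR; reflexivity. Qed.

Lemma ad_move (V : VS) (u u' v : V) t t' :
  ad u (sc t v) = ad u' (sc t' v) -> ad u (sc (-1) u') = sc (t' - t) v.
Proof.
  intro H. apply (ad_cancel_r V (ad u' (sc t v))).
  rewrite (ad_comm V u' (sc t v)), ad_ACP, ad_opp, ad_0r, H.
  rewrite ad_assoc, sc_comb, ad_comm. f_equal. f_equal. ring.
Qed.

Lemma sc_neg (V : VS) (a : R) (x : V) : sc (-1) (sc a x) = sc (- a) x.
Proof. rewrite sc_assoc; f_equal; ring. Qed.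

Record HBD := {
  hV : VS; hB : hV -> Prop; hy : hV;
  hconv : forall x y t, hB x -> hB y -> 0 <= t <= 1 -> hB (ad (sc t x) (sc (1 - t) y));
  habs : forall v, exists e, e > 0 /\ forall t, Rabs t < e -> hB (sc t v);
  hny : ~ hB hy }.

Definition rel (D : HBD) := hV D -> R -> Prop.
Definition good (D : HBD) (E : rel D) : Prop :=
  (forall u a b, E u a -> E u b -> a = b) /\
  (forall u v a b, E u a -> E v b -> E (ad u v) (a + b)) /\
  (forall t u a, E u a -> E (sc t u) (t * a)) /\
  (forall u a, E u a -> hB D u -> a <= 1) /\ E (hy D) 1.
Definition base (D : HBD) : rel D := fun u a => exists t, u = sc t (hy D) /\ a = t.
Definition incl {D : HBD} (E1 E2 : rel D) := forall u a, E1 u a -> E2 u a.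
Definition chain {D : HBD} (S : rel D -> Prop) :=
  forall E1 E2, S E1 -> S E2 -> incl E1 E2 \/ incl E2 E1.
Definition sup (D : HBD) (S : rel D -> Prop) : rel D :=
  fun u a => base D u a \/ exists E, S E /\ E u a.

Lemma B0 (D : HBD) : hB D z0.
Proof.
  destruct (habs D (hy D)) as [e [He H]]. rewrite <- (sc_0 _ (hy D)). apply H.
  rewrite Rabs_R0; lra.
Qed.

Lemma sc_inj (V : VS) (t t' : R) (y : V) : sc t y = sc t' y -> t <> t' -> y = z0.
Proof.
  intros H Hne.
  assert (H1 : sc (t - t') y = z0).
  { unfold Rminus. rewrite sc_addR, <- (sc_neg V t' y), <- H. apply ad_opp_r. }
  rewrite <- (sc_1 V y). replace 1 with (/(t - t') * (t - t')) by (field; lra).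
  rewrite <- sc_assoc, H1. apply sc_z.
Qed.

Lemma base_good (D : HBD) : good D (base D).
Proof.
  unfold good, base. repeat split.
  - intros u a b [t [Hu Ha]] [t' [Hu' Hb]]. subst.
    destruct (Req_dec t t') as [|Hne]; auto.
    exfalso. apply (hny D). rewrite (sc_inj _ t t' (hy D) Hu' Hne). apply B0.
  - intros u v a b [t [Hu Ha]] [t' [Hv Hb]]. subst. exists (t + t'). split; auto.
    rewrite sc_addR; reflexivity.
  - intros s u a [t [Hu Ha]]. subst. exists (s * t). split; auto. apply sc_assoc.
  - intros u a [t [Hu Ha]] HB. subst. destruct (Rle_dec t 1) as [|Hgt]; auto. exfalso.
    apply (hny D).
    assert (HH := hconv D _ _ (/ t) HB (B0 D)).
    rewrite sc_z, ad_0r, sc_assoc, Rinv_l, sc_1 in HH by lra. apply HH.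
    split. left; apply Rinv_0_lt_compat; lra.
    rewrite <- Rinv_1. apply Rinv_le_contravar; lra.
  - exists 1. split; auto. rewrite sc_1; auto.
Qed.

Lemma good_base_incl (D : HBD) (E : rel D) : good D E -> incl (base D) E.
Proof.
  intros (g1 & g2 & g3 & g4 & g5) u a [t [Hu Ha]]. subst.
  replace t with (t * 1) at 2 by ring. apply g3, g5.
Qed.

Lemma sup_good (D : HBD) (S : rel D -> Prop) :
  (forall E, S E -> good D E) -> chain S -> good D (sup D S).
Proof.
  intros HS Hch.
  assert (Hc : forall u a v b, sup D S u a -> sup D S v b ->
            (base D u a /\ base D v b) \/ exists E, S E /\ E u a /\ E v b).
  { intros u a v b [H1 | [E1 [S1 H1]]] [H2 | [E2 [S2 H2]]].
    - left; auto.
    - right. exists E2. split; auto. split; auto. apply (good_base_incl _ _ (HS _ S2)); auto.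
    - right. exists E1. split; auto. split; auto. apply (good_base_incl _ _ (HS _ S1)); auto.
    - right. destruct (Hch E1 E2 S1 S2) as [Hi | Hi].
      + exists E2; auto.
      + exists E1; auto. }
  destruct (base_good D) as (b1 & b2 & b3 & b4 & b5).
  unfold good. repeat split.
  - intros u a b H1 H2. destruct (Hc _ _ _ _ H1 H2) as [[Ha Hb] | [E [SE [Ha Hb]]]]; eauto.
    destruct (HS E SE) as (g1 & _); eauto.
  - intros u v a b H1 H2. destruct (Hc _ _ _ _ H1 H2) as [[Ha Hb] | [E [SE [Ha Hb]]]].
    + left; auto.
    + right. exists E. split; auto. destruct (HS E SE) as (g1 & g2 & _); eauto.
  - intros t u a [H1 | [E [SE H1]]].
    + left; auto.
    + right. exists E. split; auto. destruct (HS E SE) as (g1 & g2 & g3 & _); eauto.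
  - intros u a [H1 | [E [SE H1]]] HB.
    + eauto.
    + destruct (HS E SE) as (g1 & g2 & g3 & g4 & _); eauto.
  - left. apply b5.
Qed.

Lemma ext_step (D : HBD) (E : rel D) (v : hV D) :
  good D E -> (forall a, ~ E v a) ->
  exists E' : rel D, good D E' /\ incl E E' /\ exists a, E' v a.
Proof.
  intros HG Hv. pose proof HG as (g1 & g2 & g3 & g4 & g5).
  assert (E00 : E z0 0).
  { assert (H := g3 0 _ _ g5). rewrite sc_0, Rmult_0_l in H. exact H. }
  set (L := fun x => exists u a s, E u a /\ s > 0 /\ hB D (ad u (sc (- s) v)) /\ x = (a - 1) / s).
  set (Rs := fun y => exists u a t, E u a /\ t > 0 /\ hB D (ad u (sc t v)) /\ y = (1 - a) / t).
  assert (LR : forall x y, L x -> Rs y -> x <= y).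
  { intros x y (u1 & a1 & s & E1 & Hs & B1 & ->) (u2 & a2 & t & E2 & Ht & B2 & ->).
    set (l := t / (s + t)).
    assert (Hl : 0 <= l <= 1).
    { unfold l. split. apply Rlt_le, Rdiv_lt_0_compat; lra.
      apply Rmult_le_reg_r with (s + t); [lra|]. unfold Rdiv. rewrite Rmult_assoc, Rinv_l by lra. lra. }
    pose proof (hconv D _ _ l B1 B2 Hl) as HB.
    rewrite !sc_addV, !sc_assoc, ad_ACP, sc_comb in HB.
    replace (l * - s + (1 - l) * t) with 0 in HB by (unfold l; field; lra).
    rewrite sc_0, ad_0r in HB.
    assert (HE : E (ad (sc l u1) (sc (1 - l) u2)) (l * a1 + (1 - l) * a2)) by auto.
    pose proof (g4 _ _ HE HB) as Hle.
    assert (Hk : t * a1 + s * a2 <= s + t).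
    { assert (Hm : (l * a1 + (1 - l) * a2) * (s + t) <= 1 * (s + t)) by (apply Rmult_le_compat_r; lra).
      replace ((l * a1 + (1 - l) * a2) * (s + t)) with (t * a1 + s * a2) in Hm by (unfold l; field; lra).
      lra. }
    apply Rmult_le_reg_r with (s * t). nra.
    replace ((a1 - 1) / s * (s * t)) with (t * (a1 - 1)) by (field; lra).
    replace ((1 - a2) / t * (s * t)) with (s * (1 - a2)) by (field; lra). lra. }
  destruct (habs D v) as [e [He Hev]].
  assert (Rne : Rs (1 / (e / 2))).
  { exists z0, 0, (e / 2). repeat split; auto. lra. rewrite ad_0l. apply Hev.
    rewrite Rabs_right; lra. f_equal; ring. }
  assert (Lne : L ((0 - 1) / (e / 2))).
  { exists z0, 0, (e / 2). repeat split; auto. lra. rewrite ad_0l. apply Hev.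
    rewrite Rabs_left; lra. }
  destruct (completeness L) as [c [Hc1 Hc2]].
  { exists (1 / (e / 2)). intros x Hx. apply LR; auto. }
  { exists ((0 - 1) / (e / 2)); auto. }
  assert (cR : forall y, Rs y -> c <= y).
  { intros y Hy. apply Hc2. intros x Hx. apply LR; auto. }
  exists (fun w b => exists u a t, E u a /\ w = ad u (sc t v) /\ b = a + t * c).
  split; [|split].
  - unfold good. repeat split.
    + intros w b b' (u & a & t & Ea & -> & ->) (u' & a' & t' & Ea' & Hw & ->).
      destruct (Req_dec t t') as [<- | Hne].
      * apply ad_cancel_r in Hw. subst. rewrite (g1 _ _ _ Ea Ea'). reflexivity.
      * exfalso. apply ad_move in Hw.
        apply (Hv (/ (t' - t) * (a + (-1) * a'))).
        replace v with (sc (/ (t' - t)) (ad u (sc (-1) u'))).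
        apply g3, g2; auto.
        rewrite Hw, sc_assoc. replace (/ (t' - t) * (t' - t)) with 1 by (field; lra). apply sc_1.
    + intros w1 w2 b1 b2 (u1 & a1 & t1 & E1 & -> & ->) (u2 & a2 & t2 & E2 & -> & ->).
      exists (ad u1 u2), (a1 + a2), (t1 + t2). split; auto. split.
      rewrite ad_ACP, sc_comb; reflexivity. ring.
    + intros s w b (u & a & t & Ea & -> & ->). exists (sc s u), (s * a), (s * t).
      split; auto. split. rewrite sc_addV, sc_assoc; reflexivity. ring.
    + intros w b (u & a & t & Ea & -> & ->) HB.
      destruct (Rtotal_order t 0) as [Hneg | [-> | Hpos]].
      * assert (HL : L ((a - 1) / (- t))).
        { exists u, a, (- t). repeat split; auto. lra. rewrite Ropp_involutive; auto. }
        pose proof (Hc1 _ HL) as H1.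
        assert (H2 : (- t) * ((a - 1) / (- t)) <= (- t) * c) by (apply Rmult_le_compat_l; lra).
        replace ((- t) * ((a - 1) / (- t))) with (a - 1) in H2 by (field; lra). lra.
      * rewrite sc_0, ad_0r in HB. pose proof (g4 _ _ Ea HB). lra.
      * assert (HR : Rs ((1 - a) / t)) by (exists u, a, t; repeat split; auto).
        pose proof (cR _ HR) as H1.
        assert (H2 : t * c <= t * ((1 - a) / t)) by (apply Rmult_le_compat_l; lra).
        replace (t * ((1 - a) / t)) with (1 - a) in H2 by (field; lra). lra.
    + exists (hy D), 1, 0. split; auto. split. rewrite sc_0, ad_0r; auto. ring.
  - intros u a Ea. exists u, a, 0. split; auto. split. rewrite sc_0, ad_0r; auto. ring.
  - exists c, z0, 0, 1. split; auto. split. rewrite sc_1, ad_0l; auto. ring.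
Qed.

Lemma succ_ex (D : HBD) (E : rel D) : exists E' : rel D,
  incl E E' /\ (good D E -> good D E') /\
  (good D E -> (exists v, forall a, ~ E v a) -> exists v, (exists a, E' v a) /\ forall a, ~ E v a).
Proof.
  destruct (classic (good D E /\ exists v, forall a, ~ E v a)) as [[HG [v Hv]] | Hn].
  - destruct (ext_step D E v HG Hv) as [E' [G' [I' Hv']]].
    exists E'. split; auto. split; auto. intros _ _. exists v. auto.
  - exists E. split. intros u a; auto. split; auto. intros HG Hv. exfalso; auto.
Qed.

Definition succ (D : HBD) (E : rel D) : rel D :=
  proj1_sig (constructive_indefinite_description _ (succ_ex D E)).

Lemma succ_spec (D : HBD) (E : rel D) :
  incl E (succ D E) /\ (good D E -> good D (succ D E)) /\
  (good D E -> (exists v, forall a, ~ E v a) -> exists v, (exists a, succ D E v a) /\ forall a, ~ E v a).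
Proof. unfold succ. destruct (constructive_indefinite_description _ (succ_ex D E)) as [E' H]. exact H. Qed.

Inductive Tw (D : HBD) : rel D -> Prop :=
| Tsucc : forall E, Tw D E -> Tw D (succ D E)
| Tsup : forall S, (forall E, S E -> Tw D E) -> chain S -> Tw D (sup D S).

Lemma Tw_good (D : HBD) E : Tw D E -> good D E.
Proof.
  induction 1 as [E _ IH | S _ IH Hch].
  - apply (succ_spec D E), IH.
  - apply sup_good; auto.
Qed.

Lemma incl_refl {D : HBD} (E : rel D) : incl E E.
Proof. intros u a; auto. Qed.

Lemma incl_trans {D : HBD} (E1 E2 E3 : rel D) : incl E1 E2 -> incl E2 E3 -> incl E1 E3.
Proof. intros H1 H2 u a H; auto. Qed.

Lemma incl_antisym {D : HBD} (E1 E2 : rel D) : incl E1 E2 -> incl E2 E1 -> E1 = E2.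
Proof.
  intros H1 H2. apply functional_extensionality; intro u.
  apply functional_extensionality; intro a. apply propositional_extensionality; split; auto.
Qed.

Lemma sup_ub {D : HBD} (S : rel D -> Prop) E : S E -> incl E (sup D S).
Proof. intros HS u a H. right. exists E; auto. Qed.

Lemma sup_least {D : HBD} (S : rel D -> Prop) c :
  good D c -> (forall E, S E -> incl E c) -> incl (sup D S) c.
Proof.
  intros Hg H u a [Hb | [E [SE HE]]].
  - apply (good_base_incl D c Hg); auto.
  - apply (H E SE); auto.
Qed.

Definition extreme (D : HBD) (c : rel D) :=
  forall x, Tw D x -> incl x c -> ~ incl c x -> incl (succ D x) c.

Lemma lemma1 (D : HBD) c : Tw D c -> extreme D c ->
  forall x, Tw D x -> incl x c \/ incl (succ D c) x.
Proof.
  intros Tc Ec x Tx. induction Tx as [x Tx IH | S TS IH Hch].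
  - destruct IH as [H | H].
    + destruct (classic (incl c x)) as [H' | H'].
      * right. rewrite (incl_antisym x c H H'). apply incl_refl.
      * left. apply Ec; auto.
    + right. eapply incl_trans; [exact H | apply (succ_spec D x)].
  - destruct (classic (exists E, S E /\ incl (succ D c) E)) as [[E [SE HE]] | Hn].
    + right. eapply incl_trans; [exact HE | apply sup_ub; auto].
    + left. apply sup_least. apply Tw_good; auto.
      intros E SE. destruct (IH E SE) as [H | H]; auto. exfalso; eauto.
Qed.

Lemma lemma2 (D : HBD) c : Tw D c -> extreme D c.
Proof.
  induction 1 as [c Tc IH | S TS IH Hch].
  - intros x Tx Hxc Hn. destruct (lemma1 D c Tc IH x Tx) as [H | H]; [| exfalso; auto].
    destruct (classic (incl c x)) as [H' | H'].
    + rewrite (incl_antisym x c H H'). apply incl_refl.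
    + eapply incl_trans; [apply IH; auto | apply (succ_spec D c)].
  - intros x Tx Hxc Hn.
    destruct (classic (exists E, S E /\ ~ incl E x)) as [[E [SE HE]] | Hall].
    + destruct (lemma1 D E (TS E SE) (IH E SE) x Tx) as [H | H].
      * eapply incl_trans; [apply (IH E SE); auto | apply sup_ub; auto].
      * exfalso. apply HE. eapply incl_trans; [apply (succ_spec D E) | exact H].
    + exfalso. apply Hn. apply sup_least. apply Tw_good; auto.
      intros E SE. destruct (classic (incl E x)); auto. exfalso; eauto.
Qed.

Lemma Tw_chain (D : HBD) : chain (Tw D).
Proof.
  intros x c Tx Tc. destruct (lemma1 D c Tc (lemma2 D c Tc) x Tx) as [H | H]; auto.
  right. eapply incl_trans; [apply (succ_spec D c) | exact H].
Qed.

Theorem HB (D : HBD) : exists F : hV D -> R,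
  (forall u v, F (ad u v) = F u + F v) /\ (forall t u, F (sc t u) = t * F u) /\
  F (hy D) = 1 /\ (forall b, hB D b -> F b <= 1).
Proof.
  set (m := sup D (Tw D)).
  assert (Tm : Tw D m) by (apply Tsup; auto; apply Tw_chain).
  assert (Gm : good D m) by (apply Tw_good; auto).
  assert (Hs : incl (succ D m) m) by (apply sup_ub; apply Tsucc; auto).
  assert (Tot : forall v, exists a, m v a).
  { intro v. apply NNPP. intro Hn.
    destruct (proj2 (proj2 (succ_spec D m)) Gm) as [w [[a Ha] Hw]].
    { exists v. intros a Ha. apply Hn. eauto. }
    apply (Hw a). apply Hs; auto. }
  destruct Gm as (g1 & g2 & g3 & g4 & g5).
  set (F := fun v => proj1_sig (constructive_indefinite_description _ (Tot v))).
  assert (HF : forall v, m v (F v)).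
  { intro v. unfold F. destruct (constructive_indefinite_description _ (Tot v)); auto. }
  exists F. repeat split.
  - intros u v. apply (g1 (ad u v)); auto.
  - intros t u. apply (g1 (sc t u)); auto.
  - apply (g1 (hy D)); auto.
  - intros b Hb. apply (g4 b); auto.
Qed.

Definition toVS (X : LCS) : VS :=
  Build_VS X vadd vscal vzero (vadd_assoc X) (vadd_comm X) (vadd_0l X) (vadd_opp X)
    (vscal_1 X) (vscal_assoc X) (vscal_addR X) (vscal_addV X).

Lemma vsc0 (X : LCS) (x : X) : vscal 0 x = vzero.
Proof. exact (sc_0 (toVS X) x). Qed.
Lemma vscz (X : LCS) a : vscal a (@vzero X) = vzero.
Proof. exact (sc_z (toVS X) a). Qed.
Lemma vad0r (X : LCS) (x : X) : vadd x vzero = x.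
Proof. exact (ad_0r (toVS X) x). Qed.
Lemma vadopr (X : LCS) (x : X) : vadd x (vscal (-1) x) = vzero.
Proof. exact (ad_opp_r (toVS X) x). Qed.

Lemma conv3 (V : VS) t s (a m b c d : V) :
  ad (sc t (ad (ad a m) b)) (sc s (ad (ad c m) d)) =
  ad (ad (ad (sc t a) (sc s c)) (sc (t + s) m)) (ad (sc t b) (sc s d)).
Proof.
  rewrite !sc_addV, ad_ACP. f_equal. rewrite ad_ACP, sc_comb. reflexivity.
Qed.
Lemma conv3X (X : LCS) t s (a m b c d : X) :
  vadd (vscal t (vadd (vadd a m) b)) (vscal s (vadd (vadd c m) d)) =
  vadd (vadd (vadd (vscal t a) (vscal s c)) (vscal (t + s) m)) (vadd (vscal t b) (vscal s d)).
Proof. exact (conv3 (toVS X) t s a m b c d). Qed.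

Lemma solve (V : VS) (x u m n : V) : ad x m = ad (ad u m) n -> u = ad x (sc (-1) n).
Proof.
  intro H. assert (H' : x = ad u n).
  { apply (ad_cancel_r V m). rewrite H, <- !ad_assoc. f_equal. apply ad_comm. }
  rewrite H', <- ad_assoc, ad_opp_r, ad_0r. reflexivity.
Qed.
Lemma solveX (X : LCS) (x u m n : X) : vadd x m = vadd (vadd u m) n -> u = vadd x (vscal (-1) n).
Proof. exact (solve (toVS X) x u m n). Qed.

Lemma transl0 (X : LCS) (x n : X) : n = vadd (vadd x (vscal (-1) x)) n.
Proof. rewrite vadopr, vadd_0l. reflexivity. Qed.

Lemma nbhd (X : LCS) (U : X -> Prop) x : is_open U -> U x ->
  exists N, is_open N /\ N vzero /\ convex N /\ forall n, N n -> U (vadd x (vscal (-1) n)).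
Proof.
  intros HU Ux.
  destruct (vadd_cont X U x vzero HU) as [U1 [V1 [HU1 [HV1 [U1x [V10 H1]]]]]].
  { rewrite vad0r; auto. }
  destruct (vscal_cont X V1 (-1) vzero HV1) as [e [O [He [HO [O0 HO']]]]].
  { rewrite vscz; auto. }
  destruct (loc_convex X O HO O0) as [N [HN [N0 [Nc NO]]]].
  exists N. repeat split; auto. intros n Nn. apply H1; auto. apply HO'; auto.
  rewrite Rminus_diag, Rabs_R0; auto.
Qed.

Lemma lower (X : LCS) (N : X -> Prop) : is_open N -> N vzero ->
  exists O, is_open O /\ O vzero /\ forall o, O o -> N (vscal (-1) o).
Proof.
  intros HN N0. destruct (vscal_cont X N (-1) vzero HN) as [e [O [He [HO [O0 HO']]]]].
  { rewrite vscz; auto. }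
  exists O. repeat split; auto. intros o Oo. apply HO'; auto. rewrite Rminus_diag, Rabs_R0; auto.
Qed.

Lemma absorb (X : LCS) (N : X -> Prop) : is_open N -> N vzero ->
  forall v, exists e, e > 0 /\ forall t, Rabs t < e -> N (vscal t v).
Proof.
  intros HN N0 v. destruct (vscal_cont X N 0 v HN) as [e [O [He [HO [Ov HO']]]]].
  { rewrite vsc0; auto. }
  exists e. split; auto. intros t Ht. apply HO'; auto. rewrite Rminus_0_r; auto.
Qed.

Lemma cont (X : LCS) (f : X -> R) :
  (forall x y, f (vadd x y) = f x + f y) -> (forall a x, f (vscal a x) = a * f x) ->
  (exists W, is_open W /\ W vzero /\ forall w, W w -> Rabs (f w) <= 1) -> is_dual f.
Proof.
  intros Ha Hs [W [HW [W0 Hb]]]. split; [|split]; auto. intros U HU.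
  set (Fm := fun O : X -> Prop => is_open O /\ forall y, O y -> U (f y)).
  assert (Heq : (fun x => U (f x)) = (fun x => exists O, Fm O /\ O x)).
  { apply functional_extensionality; intro x. apply propositional_extensionality; split.
    - intro Hx. destruct (HU _ Hx) as [eps [He Hball]].
      destruct (vscal_cont X W (2 / eps) vzero HW) as [e' [U2 [He' [HU2 [U20 HU2']]]]].
      { rewrite vscz; auto. }
      destruct (vadd_cont X U2 x (vscal (-1) x) HU2) as [O [V1 [HO [HV1 [Ox [V1x Hov]]]]]].
      { rewrite vadopr; auto. }
      exists O. split; [split|]; auto. intros y Oy. apply Hball.
      assert (Hw := Hb _ (HU2' (2 / eps) _ ltac:(rewrite Rminus_diag, Rabs_R0; auto) (Hov y _ Oy V1x))).
      rewrite Hs, Ha, Hs, Rabs_mult, (Rabs_right (2 / eps)) in Hw.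
      2: { apply Rle_ge, Rlt_le, Rdiv_lt_0_compat; lra. }
      assert (Hd : Rabs (f y + -1 * f x) <= eps / 2).
      { apply Rmult_le_reg_l with (2 / eps). apply Rdiv_lt_0_compat; lra.
        replace (2 / eps * (eps / 2)) with 1 by (field; lra). exact Hw. }
      replace (f y - f x) with (f y + -1 * f x) by ring. lra.
    - intros [O [[_ HO] Ox]]. auto. }
  rewrite Heq. apply open_union. intros O [HO _]; auto.
Qed.

Lemma dual0 (X : LCS) : is_dual (fun _ : X => 0).
Proof.
  split; [|split]. intros; ring. intros; ring.
  intros U _. destruct (classic (U 0)) as [H | H].
  - replace (fun _ : X => U 0) with (fun _ : X => True). apply open_full.
    apply functional_extensionality; intro; apply propositional_extensionality; tauto.
  - replace (fun _ : X => U 0) with (fun x : X => exists O : X -> Prop, False /\ O x).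
    apply open_union. tauto.
    apply functional_extensionality; intro; apply propositional_extensionality; firstorder.
Qed.

Definition prodVS (X Z : LCS) : VS.
Proof.
  refine (Build_VS (X * Z)
    (fun p q => (vadd (fst p) (fst q), vadd (snd p) (snd q)))
    (fun a p => (vscal a (fst p), vscal a (snd p)))
    (vzero, vzero) _ _ _ _ _ _ _ _);
  intros; repeat match goal with p : (_ * _)%type |- _ => destruct p end; simpl; f_equal;
  first [apply vadd_assoc | apply vadd_comm | apply vadd_0l | apply vadd_opp | apply vscal_1
        | apply vscal_assoc | apply vscal_addR | apply vscal_addV].
Defined.

Lemma inQ_sub (Z : LCS) (C : Z -> Prop) A w : inQ C A -> convex_cone C ->
  forall a t c, A a -> C c -> 0 <= t -> w = vadd a (vscal t c) -> A w.
Proof.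
  intros HQ [_ [_ Hcone]] a t c Ha Hc Ht ->. apply HQ. intros U _ HU.
  exists (vadd a (vscal t c)). split; auto. intros K _ HK. apply HK.
  exists a, (vscal t c). auto.
Qed.

Theorem mainTheorem20 (X Z : LCS) (C : Z -> Prop)
  (HC : convex_cone C)
  (HCm : exists zs, neg_dual C zs /\ exists z, zs z <> 0)
  (g : X -> Z -> Prop)
  (Hg : forall x, inQ C (g x))
  (Hclosed : graph_closed g) (Hconv : graph_convex g) :
  forall x z, conj2 C g x z <-> g x z.
Proof.
  intros x z; split.
  2: { intros Hgz xi r zs _ _ b Hb. specialize (Hb x z Hgz). rewrite vadd_comm. exact Hb. }
  intro H2. apply NNPP; intro Hn.
  destruct (classic (exists x0 z0, g x0 z0)) as [[x0 [z0 G0]] | Hemp].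
  2: { assert (Hx := H2 (Hat (fun _ => 0)) (-1) (fun _ => 0) (dual0 X)
         (conj (dual0 Z) (fun _ _ => Rle_refl 0)) vzero).
       unfold S_conaff, xi_r in Hx. destruct (Rle_dec 0 (-1)) as [Hr | _]; [lra|].
       apply Hx. intros u v Huv. exfalso; eauto. }
  destruct (Hclosed x z Hn) as [U [Vz [HU [HVz [Ux [Vzz Hsep]]]]]].
  destruct (nbhd X U x HU Ux) as [NX [HNX [NX0 [NXc NXU]]]].
  destruct (nbhd Z Vz z HVz Vzz) as [NZ [HNZ [NZ0 [NZc NZV]]]].
  set (V := prodVS X Z).
  set (B := fun y : V => exists u v n1 n2, g u v /\ NX n1 /\ NZ n2 /\
            y = (vadd (vadd u (vscal (-1) x0)) n1, vadd (vadd v (vscal (-1) z0)) n2)).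
  set (y0 := (vadd x (vscal (-1) x0), vadd z (vscal (-1) z0)) : V).
  assert (Bconv : forall p q t, B p -> B q -> 0 <= t <= 1 -> B (ad (sc t p) (sc (1 - t) q))).
  { intros p q t (u1 & v1 & n1 & m1 & G1 & N1 & M1 & ->) (u2 & v2 & n2 & m2 & G2 & N2 & M2 & ->) Ht.
    exists (vadd (vscal t u1) (vscal (1 - t) u2)), (vadd (vscal t v1) (vscal (1 - t) v2)),
      (vadd (vscal t n1) (vscal (1 - t) n2)), (vadd (vscal t m1) (vscal (1 - t) m2)).
    repeat split; auto.
    simpl. rewrite !conv3X. replace (t + (1 - t)) with 1 by ring. rewrite !vscal_1. reflexivity. }
  assert (Babs : forall v : V, exists e, e > 0 /\ forall t, Rabs t < e -> B (sc t v)).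
  { intros [a b]. destruct (absorb X NX HNX NX0 a) as [e1 [He1 H1]].
    destruct (absorb Z NZ HNZ NZ0 b) as [e2 [He2 H2']].
    exists (Rmin e1 e2). split. apply Rmin_pos; lra. intros t Ht.
    exists x0, z0, (vscal t a), (vscal t b). repeat split; auto.
    apply H1. pose proof (Rmin_l e1 e2); lra. apply H2'. pose proof (Rmin_r e1 e2); lra.
    simpl. rewrite <- !transl0. reflexivity. }
  assert (Bny : ~ B y0).
  { intros (u & v & n1 & n2 & Guv & N1 & N2 & Heq). injection Heq; intros E2 E1.
    apply solveX in E1. apply solveX in E2. subst. exact (Hsep _ _ (NXU _ N1) (NZV _ N2) Guv). }
  destruct (HB (Build_HBD V B y0 Bconv Babs Bny)) as [F [Fadd [Fsc [Fy FB]]]].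
  simpl in *.
  set (f := fun u : X => F (u, vzero)). set (h := fun w : Z => F (vzero, w)).
  assert (Fs : forall u w, F (u, w) = f u + h w).
  { intros u w. unfold f, h. rewrite <- Fadd. simpl. rewrite vad0r, vadd_0l. reflexivity. }
  assert (fadd : forall a b, f (vadd a b) = f a + f b).
  { intros a b. unfold f. rewrite <- Fadd. simpl. rewrite vad0r. reflexivity. }
  assert (fsc : forall t a, f (vscal t a) = t * f a).
  { intros t a. unfold f. rewrite <- Fsc. simpl. rewrite vscz. reflexivity. }
  assert (hadd : forall a b, h (vadd a b) = h a + h b).
  { intros a b. unfold h. rewrite <- Fadd. simpl. rewrite vad0r. reflexivity. }
  assert (hsc : forall t a, h (vscal t a) = t * h a).
  { intros t a. unfold h. rewrite <- Fsc. simpl. rewrite vscz. reflexivity. }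
  assert (fdual : is_dual f).
  { apply cont; auto. destruct (lower X NX HNX NX0) as [O [HO [O0 HO']]].
    exists (fun w => NX w /\ O w). split. apply open_inter; auto. split; auto.
    intros w [Nw Ow]. apply Rabs_le. split.
    - assert (Hb := FB (vscal (-1) w, vzero)). fold (f (vscal (-1) w)) in Hb.
      rewrite fsc in Hb. enough (f (vscal (-1) w) <= 1) by (rewrite fsc in H; lra).
      apply FB. exists x0, z0, (vscal (-1) w), vzero. repeat split; auto.
      f_equal; apply transl0.
    - apply FB. exists x0, z0, w, vzero. repeat split; auto. f_equal; apply transl0. }
  assert (hdual : is_dual h).
  { apply cont; auto. destruct (lower Z NZ HNZ NZ0) as [O [HO [O0 HO']]].
    exists (fun w => NZ w /\ O w). split. apply open_inter; auto. split; auto.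
    intros w [Nw Ow]. apply Rabs_le. split.
    - enough (h (vscal (-1) w) <= 1) by (rewrite hsc in H; lra).
      apply FB. exists x0, z0, vzero, (vscal (-1) w). repeat split; auto.
      f_equal; apply transl0.
    - apply FB. exists x0, z0, vzero, w. repeat split; auto. f_equal; apply transl0. }
  destruct (absorb X NX HNX NX0 (vadd x (vscal (-1) x0))) as [e1 [He1 H1]].
  destruct (absorb Z NZ HNZ NZ0 (vadd z (vscal (-1) z0))) as [e2 [He2 H2']].
  set (d := Rmin e1 e2 / 2).
  assert (Hd : 0 < d) by (unfold d; pose proof (Rmin_pos e1 e2 He1 He2); lra).
  assert (Nd1 : NX (vscal d (vadd x (vscal (-1) x0)))).
  { apply H1. rewrite Rabs_right by lra. unfold d. pose proof (Rmin_l e1 e2); lra. }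
  assert (Nd2 : NZ (vscal d (vadd z (vscal (-1) z0)))).
  { apply H2'. rewrite Rabs_right by lra. unfold d. pose proof (Rmin_r e1 e2); lra. }
  unfold y0 in Fy. rewrite Fs, fadd, hadd, fsc, hsc in Fy.
  assert (Key : forall u v, g u v -> f u + h v <= f x + h z - d).
  { intros u v Guv.
    assert (Hb : F (vadd (vadd u (vscal (-1) x0)) (vscal d (vadd x (vscal (-1) x0))),
                    vadd (vadd v (vscal (-1) z0)) (vscal d (vadd z (vscal (-1) z0)))) <= 1).
    { apply FB. exists u, v, (vscal d (vadd x (vscal (-1) x0))), (vscal d (vadd z (vscal (-1) z0))).
      repeat split; auto. }
    rewrite Fs, !fadd, !hadd, !fsc, !hsc, !fadd, !hadd, !fsc, !hsc in Hb. nra. }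
  assert (hneg : neg_dual C h).
  { split; auto. intros c Cc. apply Rnot_lt_le. intro Hc.
    set (q := (f x + h z - f x0 - h z0) / h c).
    set (t := Rabs q + 1).
    assert (Gt : g x0 (vadd z0 (vscal t c))).
    { apply (inQ_sub Z C (g x0) _ (Hg x0) HC z0 t c); auto.
      unfold t; pose proof (Rabs_pos q); lra. }
    pose proof (Key _ _ Gt) as K. rewrite hadd, hsc in K.
    assert (Hq : q * h c = f x + h z - f x0 - h z0) by (unfold q; field; lra).
    assert (Hq2 : q <= Rabs q) by apply RRle_abs.
    assert (t * h c >= q * h c + h c) by (unfold t; nra). lra. }
  assert (Hx : S_conaff (Lin f) (f x + h z - d) h x (vadd vzero z)).
  { apply (H2 (Lin f) (f x + h z - d) h fdual hneg vzero).
    intros u v Guv. unfold S_conaff, xi_r, Rbar_le. rewrite vad0r.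
    pose proof (Key u v Guv). lra. }
  unfold S_conaff, xi_r, Rbar_le in Hx. rewrite vadd_0l in Hx. lra.
Qed.
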